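(* Let $n\ge 2$, $b\ge 2$ and $1\le r<b$ be integers with $n\ge b-r-1$. Then $\chi(G_{nb+r,b})=n+1$. More precisely, with $k=n-b+r+1$, the vertex set $\{0,1,\ldots,nb+r-1\}$ can be partitioned into $k$ blocks of $b$ consecutive integers followed by $b-r$ blocks of $b-1$ consecutive integers (i.e. $V_i=\{(i-1)b,\ldots,ib-1\}$ for $1\le i\le k$ and $V_i=\{(i-1)(b-1)+k,\ldots,i(b-1)+k-1\}$ for $k+1\le i\le n+1$), and this is a proper $(n+1)$-coloring.
   Context: For integers $a\ge 2b\ge 2$, $G_{a,b}$ is the graph with vertex set $\{0,1,\ldots,a-1\}$ in which distinct $u,v$ are adjacent if and only if $u\in\{v+b,v+b+1,\ldots,v+a-b\}$ with addition modulo $a$. $\chi(G)$ denotes the chromatic number. *)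

(* Defs.v *)
From mathcomp Require Import all_boot.
Set Implicit Arguments. Unset Strict Implicit. Unset Printing Implicit Defensive.

(* Adjacency in G_{a,b} on vertex set {0,...,a-1} ('I_a):
   u ~ v iff u <> v and u = v + j (mod a) for some j in {b,...,a-b},
   i.e. (u - v) mod a lies in [b, a-b]. *)
Definition Gadj (a b : nat) (u v : 'I_a) : bool :=
  (u != v) && (b <= (u + a - v) %% a <= a - b).
Arguments Gadj : clear implicits.

Definition proper_coloring (a b k : nat) (c : 'I_a -> 'I_k) : Prop :=
  forall u v : 'I_a, Gadj a b u v -> c u != c v.
Arguments proper_coloring : clear implicits.

Definition colorableb (a b k : nat) : bool :=
  [exists c : {ffun 'I_a -> 'I_k},
     [forall u : 'I_a, forall v : 'I_a, Gadj a b u v ==> (c u != c v)]].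

Lemma colorable_exists (a b : nat) : exists k, colorableb a b k.
Proof.
exists a; apply/existsP; exists [ffun u => u].
by apply/forallP => u; apply/forallP => v; apply/implyP => /andP[H _]; rewrite !ffunE.
Qed.

Definition chi (a b : nat) : nat := ex_minn (colorable_exists a b).

(* The block V_i (1-indexed) of the paper, with k = n - b + r + 1. *)
Definition in_block (n b r i v : nat) : bool :=
  let k := n + r + 1 - b in
  ((1 <= i <= k) && ((i - 1) * b <= v <= i * b - 1))
  || ((k + 1 <= i <= n + 1) &&
      ((i - 1) * (b - 1) + k <= v <= i * (b - 1) + k - 1)).

(* Main.v *)
From mathcomp Require Import all_boot zify.
Require Import Defs.
Set Implicit Arguments. Unset Strict Implicit.
Lemma modsub a x u : x < a -> u < a ->
  (u + a - x) %% a = if x <= u then u - x else u + a - x.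
Proof.
move=> xa ua; case: ifP => H.
  have -> : u + a - x = (u - x) + a by lia.
  by rewrite modnDr modn_small //; lia.
by rewrite modn_small //; lia.
Qed.

Definition hh a b x u := let d := (u + a - x) %% a in if d < b then d else d + b - a.

Lemma key a b x u v : 0 < b -> 2 * b <= a -> x < a -> u < a -> v < a ->
  (u = x \/ ~~ (b <= (u + a - x) %% a <= a - b)) ->
  (v = x \/ ~~ (b <= (v + a - x) %% a <= a - b)) ->
  (u = v \/ ~~ (b <= (u + a - v) %% a <= a - b)) ->
  hh a b x u = hh a b x v -> u = v.
Proof.
move=> b0 ab xa ua va; rewrite /hh /= !modsub //.
repeat case: ifP => ?; lia.
Qed.

Lemma hlt a b x u : 0 < b -> 2 * b <= a -> x < a -> u < a ->
  (u = x \/ ~~ (b <= (u + a - x) %% a <= a - b)) -> hh a b x u < b.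
Proof.
move=> b0 ab xa ua; rewrite /hh /= !modsub //.
repeat case: ifP => ?; lia.
Qed.

Lemma nonadj a b k (c : 'I_a -> 'I_k) (u v : 'I_a) :
  proper_coloring a b k c -> c u = c v ->
  (val u = val v \/ ~~ (b <= (u + a - v) %% a <= a - b)).
Proof.
move=> pc e; case: (boolP (Gadj a b u v)) => [/pc|]; first by rewrite e eqxx.
rewrite /Gadj negb_and negbK => /orP[/eqP -> |]; by [left | right].
Qed.

Lemma count_bound a b k (c : 'I_a -> 'I_k) : 0 < b -> 2 * b <= a ->
  proper_coloring a b k c -> a <= k * b.
Proof.
move=> b0 ab pc.
case: a c pc ab => [|a'] c pc ab; first by [].
set a := a'.+1 in c pc ab *.
pose x0 : 'I_a := ord0.
pose rep (col : 'I_k) := odflt x0 [pick x | c x == col].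
have repP u : c (rep (c u)) = c u.
  rewrite /rep; case: pickP => [y /eqP //|/(_ u)]; by rewrite eqxx.
pose g (u : 'I_a) : 'I_k * 'I_b := (c u, Ordinal (ltn_pmod (hh a b (rep (c u)) u) b0)).
have ginj : injective g.
  move=> u v [e1 e2].
  have hu := hlt b0 ab (ltn_ord (rep (c u))) (ltn_ord u)
     (nonadj pc (esym (repP u))).
  have hv := hlt b0 ab (ltn_ord (rep (c u))) (ltn_ord v)
     (nonadj pc (esym (etrans (repP u) e1))).
  rewrite -e1 /= !modn_small // in e2.
  apply: val_inj; exact: (key b0 ab (ltn_ord (rep (c u))) (ltn_ord u) (ltn_ord v)
    (nonadj pc (esym (repP u))) (nonadj pc (esym (etrans (repP u) e1))) (nonadj pc e1) e2).
have := leq_card g ginj.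
by rewrite card_prod !card_ord.
Qed.
Lemma div_eq m d q : 0 < d -> q * d <= m -> m < q.+1 * d -> m %/ d = q.
Proof.
move=> d0 h1 h2; apply/eqP; rewrite eqn_leq leq_divRL // h1 andbT.
by rewrite -ltnS ltn_divLR.
Qed.

Definition blk n b r v :=
  let K := n + r + 1 - b in
  if v < K * b then v %/ b + 1 else (v - K) %/ (b - 1) + 1.

Section B.
Variables (n b r : nat) (hn : 2 <= n) (hb : 2 <= b)
  (hr1 : 1 <= r) (hrb : r < b) (hnbr : b - r - 1 <= n).
Let K := n + r + 1 - b.
Let a := n * b + r.
Lemma aK : a = K + (n + 1) * (b - 1).
Proof.
rewrite /a /K. have -> : b = (b - 1) + 1 by lia.
rewrite !mulnDr !mulnDl; lia.
Qed.

Lemma blk_in v : v < a -> in_block n b r (blk n b r v) v.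
Proof.
move=> va; rewrite /in_block /blk -/K.
have b0 : 0 < b by lia.
have b1 : 0 < b - 1 by lia.
case: ifP => H.
  apply/orP; left.
  have h1 := leq_divM v b; have h2 := ltn_ceil v b0.
  have h3 : v %/ b < K by rewrite ltn_divLR.
  rewrite addnK; rewrite mulSn in h2; rewrite mulnDl mul1n.
  move: h1 h2 h3 H; generalize (v %/ b) => q; generalize K => K'; lia.
apply/orP; right.
have h1 := leq_divM (v - K) (b - 1); have h2 := ltn_ceil (v - K) b1.
have h3 : K <= (v - K) %/ (b - 1).
  rewrite leq_divRL //. move: H; rewrite mulnBr muln1. lia.
have h4 : (v - K) %/ (b - 1) < n + 1.
  rewrite ltn_divLR //. move: va; rewrite aK. lia.
rewrite addnK; rewrite mulSn in h2; rewrite mulnDl mul1n.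
have h5 : K <= v by move: H; rewrite ltnNge => /negbFE; apply: leq_trans; rewrite leq_pmulr.
move: h1 h2 h3 h4 h5; generalize ((v - K) %/ (b - 1)) => q; rewrite /K; lia.
Qed.

Lemma blk_uniq i v : v < a -> in_block n b r i v -> i = blk n b r v.
Proof.
move=> va; rewrite /in_block /blk -/K.
have b0 : 0 < b by lia.
have b1 : 0 < b - 1 by lia.
case/orP => /andP[/andP[i1 i2] /andP[v1 v2]].
  case: i i1 i2 v1 v2 => [|j] i1 i2 v1 v2; first by lia.
  have vK : v < K * b.
    have := leq_mul i2 (leqnn b). rewrite mulSn in v2 *. lia.
  rewrite vK (@div_eq _ _ j b0) ?addn1 //; rewrite ?mulSn; lia.
case: i i1 i2 v1 v2 => [|j] i1 i2 v1 v2; first by lia.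
have vK : ~~ (v < K * b).
  have hj : K <= j by lia.
  have := leq_mul hj (leqnn (b - 1)). rewrite mulnBr muln1.
  rewrite subSS subn0 in v1. rewrite -leqNgt.
  have : K <= K * b by rewrite leq_pmulr; lia.
  lia.
rewrite (negbTE vK) (@div_eq _ _ j b1) ?addn1 //; rewrite ?mulSn in v2 *; lia.
Qed.

Lemma blk_small i u v : in_block n b r i u -> in_block n b r i v ->
  u <= v + (b - 1).
Proof.
rewrite /in_block -/K.
case/orP => /andP[/andP[i1 i2] /andP[u1 u2]];
case/orP => /andP[/andP[i1' i2'] /andP[v1 v2]]; try lia.
  case: i i1 i2 u1 u2 i1' i2' v1 v2 => [|j]; [lia | rewrite subSS subn0 mulSn; lia].
case: i i1 i2 u1 u2 i1' i2' v1 v2 => [|j]; [lia | rewrite subSS subn0 mulSn; lia].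
Qed.
End B.

Lemma in_block_range n b r i v : b - r - 1 <= n -> r < b -> in_block n b r i v -> 0 < i <= n + 1.
Proof. move=> h1 h2; rewrite /in_block; case/orP => /andP[/andP[i1 i2] _]; lia. Qed.


Lemma L_ab (n b r : nat) (hn : 2 <= n) (hb : 2 <= b) (hr1 : 1 <= r) (hrb : r < b) (hnbr : b - r - 1 <= n) : 2 * b <= n * b + r.
Proof. have := leq_mul hn (leqnn b); lia. Qed.
Lemma L_indep (n b r : nat) (hn : 2 <= n) (hb : 2 <= b) (hr1 : 1 <= r) (hrb : r < b) (hnbr : b - r - 1 <= n) : forall (i : nat) (u v : 'I_(n * b + r)),
     in_block n b r i u -> in_block n b r i v -> ~~ Gadj (n * b + r) b u v.
Proof.
  have ab := L_ab hn hb hr1 hrb hnbr.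
  move=> i u v hu hv.
  have h1 := blk_small hn hb hr1 hrb hnbr hu hv; have h2 := blk_small hn hb hr1 hrb hnbr hv hu.
  rewrite /Gadj negb_and negbK modsub //; case: ifP => ?; apply/orP; right; lia.
Qed.
Lemma L_blkin (n b r : nat) (hn : 2 <= n) (hb : 2 <= b) (hr1 : 1 <= r) (hrb : r < b) (hnbr : b - r - 1 <= n) : forall v : 'I_(n * b + r), in_block n b r (blk n b r v) v.
Proof. by move=> v; apply: (blk_in hn hb hr1 hrb hnbr); exact: ltn_ord. Qed.
Lemma L_blklt (n b r : nat) (hn : 2 <= n) (hb : 2 <= b) (hr1 : 1 <= r) (hrb : r < b) (hnbr : b - r - 1 <= n) : forall v : 'I_(n * b + r), blk n b r v - 1 < n + 1.
Proof. move=> v; have := in_block_range hnbr hrb (L_blkin hn hb hr1 hrb hnbr v); lia. Qed.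
Lemma L_part (n b r : nat) (hn : 2 <= n) (hb : 2 <= b) (hr1 : 1 <= r) (hrb : r < b) (hnbr : b - r - 1 <= n) :
  (forall v : 'I_(n * b + r),
     exists i, [/\ 1 <= i <= n + 1, in_block n b r i v &
                 forall j, in_block n b r j v -> j = i]).
Proof.
move=> v; exists (blk n b r v); split.
  - exact: in_block_range hnbr hrb (L_blkin hn hb hr1 hrb hnbr v).
  - exact: L_blkin.
move=> j hj; apply: (blk_uniq hn hb hr1 hrb hnbr _ hj). exact: ltn_ord.
Qed.
Lemma L_chi (n b r : nat) (hn : 2 <= n) (hb : 2 <= b) (hr1 : 1 <= r) (hrb : r < b) (hnbr : b - r - 1 <= n) :
  chi (n * b + r) b = n + 1.
Proof.
have b0 : 0 < b by lia.
have ab := L_ab hn hb hr1 hrb hnbr.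
have blkin := L_blkin hn hb hr1 hrb hnbr.
have blklt := L_blklt hn hb hr1 hrb hnbr.
have indep := L_indep hn hb hr1 hrb hnbr.
  rewrite /chi; case: ex_minnP => m Hm Hmin.
  have col : colorableb (n * b + r) b (n + 1).
    apply/existsP; exists [ffun v => Ordinal (blklt v)].
    apply/forallP => u; apply/forallP => v; apply/implyP => G.
    rewrite !ffunE; apply/negP => /eqP [] E.
    have E' : blk n b r u = blk n b r v.
      have := in_block_range hnbr hrb (blkin u).
      have := in_block_range hnbr hrb (blkin v). lia.
    have := indep _ u v (blkin u). rewrite E' => /(_ (blkin v)).
    by rewrite G.
  have := Hmin _ col.
  move: Hm => /existsP [c /forallP Hc].
  have pc : proper_coloring (n * b + r) b m c.
    move=> u v G; have := Hc u; move/forallP => /(_ v) /implyP; exact.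
  have := count_bound b0 ab pc.
  case: (leqP m n) => mn; last lia.
  have := leq_mul mn (leqnn b). lia.
Qed.

Theorem mainTheorem8 (n b r : nat) (hn : 2 <= n) (hb : 2 <= b)
  (hr1 : 1 <= r) (hrb : r < b) (hnbr : b - r - 1 <= n) :
  chi (n * b + r) b = n + 1 /\
  (* the blocks V_1, ..., V_{n+1} partition the vertex set *)
  (forall v : 'I_(n * b + r),
     exists i, [/\ 1 <= i <= n + 1, in_block n b r i v &
                 forall j, in_block n b r j v -> j = i]) /\
  (* each block is an independent set, i.e. the partition is a proper colouring *)
  (forall (i : nat) (u v : 'I_(n * b + r)),
     in_block n b r i u -> in_block n b r i v -> ~~ Gadj (n * b + r) b u v).
Proof.
split; first exact: (L_chi hn hb hr1 hrb hnbr).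
split; first exact: (L_part hn hb hr1 hrb hnbr).
exact: (L_indep hn hb hr1 hrb hnbr).
Qed.
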